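(* Let $n\ge3$ be odd, $n_1=(n+1)/2$, and let $\widehat Z=\mathrm{diag}(\widehat Z_1,\dots,\widehat Z_d)$ with $\widehat Z_i\in\mathbb C^{n_1\times n_1}$ satisfy $\max_{p\in[n_1]}\frac1d\sum_{i=1}^d\|e_p^{\mathsf T}\widehat Z_i\|_2^2\le B$. Then $$\frac1d\sum_{i=1}^d\sum_{k=1}^n\frac1{w_k}\big|\langle\widehat Z_i,G_k\rangle\big|^2\le C\,B\log(n_1)$$ for an absolute constant $C>0$.
   Context: For $a\in[n]$, $w_a=\#\{(j,k)\in[n_1]\times[n_1]:j+k=a+1\}$ and $G_a=w_a^{-1/2}\sum_{j+k=a+1}e_je_k^{\mathsf T}\in\mathbb R^{n_1\times n_1}$. Inner product $\langle A,B\rangle=\mathrm{tr}(AB^{\mathsf H})$. *)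

(* Defs.v *)
From Stdlib Require Import Reals Arith.
Open Scope R_scope.

Definition Cx : Type := (R * R)%type.
Definition C0 : Cx := (0, 0).
Definition Cadd (x y : Cx) : Cx := (fst x + fst y, snd x + snd y).
Definition Cmul (x y : Cx) : Cx :=
  (fst x * fst y - snd x * snd y, fst x * snd y + snd x * fst y).
Definition Cconj (x : Cx) : Cx := (fst x, - snd x).
Definition RtoC (r : R) : Cx := (r, 0).
Definition Cnorm2 (x : Cx) : R := fst x * fst x + snd x * snd x.

Fixpoint rsum (m : nat) (f : nat -> R) : R :=
  match m with O => 0 | S m' => rsum m' f + f m' end.
Fixpoint csum (m : nat) (f : nat -> Cx) : Cx :=
  match m with O => C0 | S m' => Cadd (csum m' f) (f m') end.

(* square complex matrices of size n1, indices 0 .. n1-1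
   (entries outside this range are irrelevant) *)
Definition cmat : Type := nat -> nat -> Cx.

Definition cinner (n1 : nat) (A B : cmat) : Cx :=
  csum n1 (fun j => csum n1 (fun k => Cmul (A j k) (Cconj (B j k)))).

Definition rownorm2 (n1 : nat) (A : cmat) (p : nat) : R :=
  rsum n1 (fun k => Cnorm2 (A p k)).

(* With 0-based indices j,k in {0..n1-1} and a in {0..n-1}, the paper's
   condition j+k = a+1 (1-based) becomes j+k = a. *)
Definition wt (n1 a : nat) : nat :=
  List.length (List.filter (fun jk => Nat.eqb (fst jk + snd jk) a)
    (List.list_prod (List.seq 0 n1) (List.seq 0 n1))).

Definition Gmat (n1 a : nat) : cmat :=
  fun j k => if Nat.eqb (j + k) a then RtoC (/ sqrt (INR (wt n1 a))) else C0.

(* Main.v *)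
Require Import Defs.
From Stdlib Require Import Reals Arith.
From Stdlib Require Import Lia Lra List.
Open Scope R_scope.

Lemma rsum_S m f : rsum (S m) f = rsum m f + f m.
Proof. reflexivity. Qed.

Lemma rsum_ext m f g : (forall x, (x < m)%nat -> f x = g x) -> rsum m f = rsum m g.
Proof. induction m; simpl; intros H; [reflexivity|].
 rewrite IHm by (intros; apply H; lia). rewrite H by lia. reflexivity. Qed.

Lemma rsum_zero m : rsum m (fun _ => 0) = 0.
Proof. induction m; simpl; [reflexivity|]. rewrite IHm; ring. Qed.

Lemma rsum_plus m f g : rsum m (fun x => f x + g x) = rsum m f + rsum m g.
Proof. induction m; simpl; [ring|]. rewrite IHm; ring. Qed.

Lemma rsum_scal m c f : rsum m (fun x => c * f x) = c * rsum m f.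
Proof. induction m; simpl; [ring|]. rewrite IHm; ring. Qed.

Lemma rsum_le m f g : (forall x, (x < m)%nat -> f x <= g x) -> rsum m f <= rsum m g.
Proof. induction m; simpl; intros H; [lra|].
 apply Rplus_le_compat; [apply IHm; intros; apply H; lia| apply H; lia]. Qed.

Lemma rsum_nonneg m f : (forall x, (x < m)%nat -> 0 <= f x) -> 0 <= rsum m f.
Proof. intros H. rewrite <- (rsum_zero m). apply rsum_le; auto. Qed.

Lemma rsum_swap a b (f : nat -> nat -> R) :
  rsum a (fun i => rsum b (fun j => f i j)) = rsum b (fun j => rsum a (fun i => f i j)).
Proof. induction a; simpl.
 - symmetry; apply rsum_zero.
 - rewrite IHa. rewrite rsum_plus. reflexivity. Qed.

Lemma rsum_shift m f : rsum (S m) f = f 0%nat + rsum m (fun j => f (S j)).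
Proof. induction m. simpl; ring.
 rewrite rsum_S, IHm. rewrite rsum_S. ring. Qed.

Lemma rsum_ind n j (x : nat -> R) : (j < n)%nat ->
  rsum n (fun k => (if (j =? k)%nat then 1 else 0) * x k) = x j.
Proof. induction n; intros Hj; [lia|]. rewrite rsum_S.
 destruct (Nat.eq_dec j n).
 - subst. rewrite Nat.eqb_refl.
   rewrite (rsum_ext n _ (fun _ => 0)). rewrite rsum_zero; ring.
   intros k Hk. destruct (n =? k)%nat eqn:E; [apply Nat.eqb_eq in E; lia| ring].
 - rewrite IHn by lia. destruct (j =? n)%nat eqn:E; [apply Nat.eqb_eq in E; lia | ring].
Qed.

Definition D m (f : nat -> nat -> R) := rsum m (fun j => rsum m (fun l => f j l)).

Lemma D_ext m f g : (forall j l, (j < m)%nat -> (l < m)%nat -> f j l = g j l) -> D m f = D m g.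
Proof. intros H. unfold D. apply rsum_ext; intros j Hj. apply rsum_ext; intros l Hl. auto. Qed.

Lemma D_plus m f g : D m (fun j l => f j l + g j l) = D m f + D m g.
Proof. unfold D. rewrite <- rsum_plus. apply rsum_ext; intros. apply rsum_plus. Qed.

Lemma D_scal m c f : D m (fun j l => c * f j l) = c * D m f.
Proof. unfold D. rewrite <- rsum_scal. apply rsum_ext; intros. apply rsum_scal. Qed.

Lemma D_le m f g : (forall j l, (j < m)%nat -> (l < m)%nat -> f j l <= g j l) -> D m f <= D m g.
Proof. intros H. unfold D. apply rsum_le; intros j Hj. apply rsum_le; intros l Hl. auto. Qed.

Lemma D_nonneg m f : (forall j l, (j < m)%nat -> (l < m)%nat -> 0 <= f j l) -> 0 <= D m f.
Proof. intros H. unfold D. apply rsum_nonneg; intros j Hj. apply rsum_nonneg; intros l Hl. auto. Qed.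

Lemma D_swap n m (f : nat -> nat -> nat -> R) :
  rsum n (fun k => D m (fun j l => f k j l)) = D m (fun j l => rsum n (fun k => f k j l)).
Proof. unfold D. rewrite rsum_swap. apply rsum_ext; intros. apply rsum_swap. Qed.

Lemma D_CS m a u : (forall j l, (j < m)%nat -> (l < m)%nat -> 0 <= a j l) -> 0 < D m a ->
  (D m (fun j l => a j l * u j l))^2 <= D m a * D m (fun j l => a j l * u j l ^ 2).
Proof. intros Ha HA.
 assert (H: forall t, 0 <= D m (fun j l => a j l * (u j l - t)^2)).
 { intros t. apply D_nonneg; intros. apply Rmult_le_pos; [auto| apply pow2_ge_0]. }
 assert (E: forall t, D m (fun j l => a j l * (u j l - t)^2) =
   D m (fun j l => a j l * u j l ^ 2) + (-2*t) * D m (fun j l => a j l * u j l) + t^2 * D m a).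
 { intros t. rewrite <- !D_scal, <- !D_plus. apply D_ext; intros; ring. }
 set (S := D m (fun j l => a j l * u j l)) in *.
 set (Q := D m (fun j l => a j l * u j l ^ 2)) in *.
 set (A := D m a) in *.
 specialize (H (S / A)). rewrite E in H.
 assert (E2 : S / A * A = S) by (field; lra).
 assert (H2 : 0 <= Q - S / A * S).
 { replace (Q - S / A * S) with (Q + -2 * (S / A) * S + (S / A) ^ 2 * A). lra.
   field. lra. }
 replace (S ^ 2) with (A * (S / A * S)) by (field; lra).
 apply Rmult_le_compat_l; lra.
Qed.

Definition ind (k j l : nat) : R := if (j + l =? k)%nat then 1 else 0.

Lemma fst_csum m f : fst (csum m f) = rsum m (fun x => fst (f x)).
Proof. induction m; simpl; [reflexivity| rewrite IHm; reflexivity]. Qed.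
Lemma snd_csum m f : snd (csum m f) = rsum m (fun x => snd (f x)).
Proof. induction m; simpl; [reflexivity| rewrite IHm; reflexivity]. Qed.

Lemma cinner_fst n1 Z k : fst (cinner n1 Z (Gmat n1 k)) =
  / sqrt (INR (wt n1 k)) * D n1 (fun j l => ind k j l * fst (Z j l)).
Proof. unfold cinner. rewrite fst_csum. unfold D. rewrite <- rsum_scal.
 apply rsum_ext; intros j _. rewrite fst_csum, <- rsum_scal. apply rsum_ext; intros l _.
 unfold Gmat, ind, Cmul, Cconj, RtoC, C0. destruct (j + l =? k)%nat; simpl; ring. Qed.
Lemma cinner_snd n1 Z k : snd (cinner n1 Z (Gmat n1 k)) =
  / sqrt (INR (wt n1 k)) * D n1 (fun j l => ind k j l * snd (Z j l)).
Proof. unfold cinner. rewrite snd_csum. unfold D. rewrite <- rsum_scal.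
 apply rsum_ext; intros j _. rewrite snd_csum, <- rsum_scal. apply rsum_ext; intros l _.
 unfold Gmat, ind, Cmul, Cconj, RtoC, C0. destruct (j + l =? k)%nat; simpl; ring. Qed.

Fixpoint nsum (m : nat) (f : nat -> nat) : nat :=
  match m with O => O | S m' => (nsum m' f + f m')%nat end.

Lemma INR_nsum m f : INR (nsum m f) = rsum m (fun x => INR (f x)).
Proof. induction m; [reflexivity|]. cbn [nsum]. rewrite plus_INR, IHm. reflexivity. Qed.

Lemma list_prod_app {A B : Type} (L1 L2 : list A) (M : list B) :
  list_prod (L1 ++ L2) M = list_prod L1 M ++ list_prod L2 M.
Proof. induction L1; simpl; [reflexivity|]. rewrite IHL1, app_assoc. reflexivity. Qed.

Lemma count_inner a x m2 :
  length (filter (fun jk => Nat.eqb (fst jk + snd jk) a) (map (fun y => (x, y)) (seq 0 m2)))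
  = nsum m2 (fun l => if (x + l =? a)%nat then 1%nat else 0%nat).
Proof. induction m2; [reflexivity|]. rewrite seq_S, map_app, filter_app, length_app, IHm2.
 cbn [nsum]. simpl. destruct (x + m2 =? a)%nat; simpl; lia. Qed.

Lemma wt_nsum_gen a m1 m2 :
  length (filter (fun jk => Nat.eqb (fst jk + snd jk) a) (list_prod (seq 0 m1) (seq 0 m2)))
  = nsum m1 (fun j => nsum m2 (fun l => if (j + l =? a)%nat then 1%nat else 0%nat)).
Proof. induction m1; [reflexivity|]. rewrite seq_S, list_prod_app, filter_app, length_app, IHm1.
 cbn [nsum]. f_equal. simpl. rewrite app_nil_r. apply count_inner. Qed.

Lemma wt_nsum n1 a : wt n1 a =
  nsum n1 (fun j => nsum n1 (fun l => if (j + l =? a)%nat then 1%nat else 0%nat)).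
Proof. unfold wt. apply wt_nsum_gen. Qed.

Lemma wt_D n1 a : INR (wt n1 a) = D n1 (ind a).
Proof. rewrite wt_nsum, INR_nsum. unfold D. apply rsum_ext; intros j _.
 rewrite INR_nsum. apply rsum_ext; intros l _. unfold ind.
 destruct (j + l =? a)%nat; reflexivity. Qed.

Lemma nsum_le m f g : (forall x, (x < m)%nat -> (f x <= g x)%nat) -> (nsum m f <= nsum m g)%nat.
Proof. induction m; intros H; cbn [nsum]; [lia|].
 assert (nsum m f <= nsum m g)%nat by (apply IHm; intros; apply H; lia).
 specialize (H m). lia. Qed.

Lemma nsum_ge_term m f i : (i < m)%nat -> (f i <= nsum m f)%nat.
Proof. induction m; intros H; cbn [nsum]; [lia|].
 destruct (Nat.eq_dec i m). subst; lia. specialize (IHm ltac:(lia)). lia. Qed.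

Lemma count_interval N lo hi :
  (Nat.min N (S hi) - lo <= nsum N (fun j => if andb (lo <=? j)%nat (j <=? hi)%nat then 1%nat else 0%nat))%nat.
Proof. induction N; cbn [nsum]; [lia|].
 destruct (Nat.leb_spec lo N), (Nat.leb_spec N hi); cbn [andb]; lia. Qed.

Lemma wt_lower n1 k : (Nat.min n1 (S k) - (S k - n1) <= wt n1 k)%nat.
Proof. rewrite wt_nsum. eapply Nat.le_trans; [apply (count_interval n1 (S k - n1) k)|].
 apply nsum_le. intros j' Hj'.
 destruct (Nat.leb_spec (S k - n1) j'), (Nat.leb_spec j' k); simpl; try lia.
 eapply Nat.le_trans; [|apply (nsum_ge_term n1 _ (k - j')); lia].
 simpl. replace (j' + (k - j'))%nat with k by lia. rewrite Nat.eqb_refl. lia. Qed.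

Lemma weight_bound n1 j l : (j < n1)%nat -> (l < n1)%nat ->
  / INR (wt n1 (j + l)) <= / INR (S j) + / INR (n1 - j).
Proof. intros Hj Hl. pose proof (wt_lower n1 (j + l)) as W.
 assert (HS: 0 < INR (S j)) by (apply lt_0_INR; lia).
 assert (HT: 0 < INR (n1 - j)) by (apply lt_0_INR; lia).
 assert (H: (S j <= wt n1 (j + l))%nat \/ (n1 - j <= wt n1 (j + l))%nat) by lia.
 destruct H as [H|H]; apply le_INR in H.
 - assert (/ INR (wt n1 (j + l)) <= / INR (S j)) by (apply Rinv_le_contravar; lra).
   pose proof (Rinv_0_lt_compat _ HT). lra.
 - assert (/ INR (wt n1 (j + l)) <= / INR (n1 - j)) by (apply Rinv_le_contravar; lra).
   pose proof (Rinv_0_lt_compat _ HS). lra.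
Qed.

Lemma Cnorm2_nonneg z : 0 <= Cnorm2 z.
Proof. unfold Cnorm2. pose proof (Rle_0_sqr (fst z)). pose proof (Rle_0_sqr (snd z)).
 unfold Rsqr in *. lra. Qed.

Lemma ind_nonneg k j l : 0 <= ind k j l.
Proof. unfold ind. destruct (j + l =? k)%nat; lra. Qed.

Lemma term_bound n1 (Z : cmat) k : (0 < wt n1 k)%nat ->
  / INR (wt n1 k) * Cnorm2 (cinner n1 Z (Gmat n1 k)) <=
  D n1 (fun j l => ind k j l * (/ INR (wt n1 k) * Cnorm2 (Z j l))).
Proof. intros Hw.
 assert (Hwpos: 0 < INR (wt n1 k)) by (apply lt_0_INR; lia).
 assert (HA: D n1 (ind k) = INR (wt n1 k)) by (symmetry; apply wt_D).
 pose proof (D_CS n1 (ind k) (fun j l => fst (Z j l)) ltac:(intros; apply ind_nonneg) ltac:(lra)) as CR.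
 pose proof (D_CS n1 (ind k) (fun j l => snd (Z j l)) ltac:(intros; apply ind_nonneg) ltac:(lra)) as CI.
 cbv beta in CR, CI. rewrite HA in CR, CI.
 rewrite (D_ext n1 _ (fun j l => / INR (wt n1 k) * (ind k j l * fst (Z j l) ^ 2 + ind k j l * snd (Z j l) ^2)))
   by (intros; unfold Cnorm2; ring).
 rewrite D_scal, D_plus.
 unfold Cnorm2 at 1. rewrite cinner_fst, cinner_snd.
 set (g := / sqrt (INR (wt n1 k))).
 assert (Hg: g * g = / INR (wt n1 k)).
 { unfold g. rewrite <- Rinv_mult. rewrite sqrt_sqrt; lra. }
 set (w := INR (wt n1 k)) in *.
 set (SR := D n1 (fun j l => ind k j l * fst (Z j l))) in *.
 set (SI := D n1 (fun j l => ind k j l * snd (Z j l))) in *.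
 set (QR := D n1 (fun j l => ind k j l * fst (Z j l) ^ 2)) in *.
 set (QI := D n1 (fun j l => ind k j l * snd (Z j l) ^ 2)) in *.
 replace (/ w * (g * SR * (g * SR) + g * SI * (g * SI))) with ((/ w * / w) * (SR ^ 2 + SI ^ 2))
   by (rewrite <- Hg; ring).
 apply Rle_trans with ((/ w * / w) * (w * QR + w * QI)).
 - apply Rmult_le_compat_l. pose proof (Rinv_0_lt_compat _ Hwpos). nra. lra.
 - right. field. lra.
Qed.

Lemma per_i m (Z : cmat) :
  rsum (2 * m + 1) (fun k => / INR (wt (S m) k) * Cnorm2 (cinner (S m) Z (Gmat (S m) k)))
  <= rsum (S m) (fun j => (/ INR (S j) + / INR (S m - j)) * rownorm2 (S m) Z j).
Proof.
 set (n1 := S m). set (c := fun j => / INR (S j) + / INR (n1 - j)).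
 apply Rle_trans with (rsum (2 * m + 1) (fun k => D n1 (fun j l => ind k j l * (c j * Cnorm2 (Z j l))))).
 - apply rsum_le. intros k Hk. eapply Rle_trans. apply term_bound.
   { pose proof (wt_lower n1 k). unfold n1 in *. lia. }
   apply D_le. intros j l Hj Hl. unfold ind. destruct (j + l =? k)%nat eqn:E.
   + apply Nat.eqb_eq in E. subst k. rewrite !Rmult_1_l. apply Rmult_le_compat_r.
     apply Cnorm2_nonneg. apply weight_bound; auto.
   + lra.
 - right. rewrite (D_swap _ _ (fun k j l => ind k j l * (c j * Cnorm2 (Z j l)))).
   rewrite (D_ext n1 _ (fun j l => c j * Cnorm2 (Z j l))).
   + unfold D, rownorm2. apply rsum_ext; intros j _. apply rsum_scal.
   + intros j l Hj Hl. unfold ind. apply (rsum_ind (2 * m + 1) (j + l) (fun _ => c j * Cnorm2 (Z j l))).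
     unfold n1 in *. lia.
Qed.

Lemma ln_le_minus1 y : 0 < y -> ln y <= y - 1.
Proof. intros Hy. pose proof (exp_ineq1_le (ln y)). rewrite exp_ln in H by lra. lra. Qed.

Lemma ln_step m : (1 <= m)%nat -> / INR (S m) <= ln (INR (S m)) - ln (INR m).
Proof. intros Hm1. assert (Hm: 0 < INR m) by (apply lt_0_INR; lia). rewrite S_INR.
 set (x := INR m) in *.
 assert (E: ln x = ln (x + 1) + ln (x / (x + 1))).
 { rewrite <- ln_mult. f_equal. field. lra. lra. apply Rdiv_lt_0_compat; lra. }
 assert (ln (x / (x + 1)) <= x / (x + 1) - 1) by (apply ln_le_minus1; apply Rdiv_lt_0_compat; lra).
 assert (x / (x + 1) - 1 = - / (x + 1)) by (field; lra). lra. Qed.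

Lemma H_bound m : (1 <= m)%nat -> rsum m (fun j => / INR (S j)) <= 1 + ln (INR m).
Proof. induction m; intros Hm; [lia|]. destruct m.
 - simpl. rewrite ln_1. lra.
 - rewrite rsum_S. pose proof (IHm ltac:(lia)). pose proof (ln_step (S m) ltac:(lia)). lra. Qed.

Lemma T_bound m : (1 <= m)%nat -> rsum m (fun j => / INR (m - j)) <= 1 + ln (INR m).
Proof. induction m; intros Hm; [lia|]. destruct m.
 - simpl. rewrite ln_1. lra.
 - rewrite rsum_shift. cbv beta. rewrite Nat.sub_0_r.
   change (rsum (S m) (fun j => / INR (S (S m) - S j))) with (rsum (S m) (fun j => / INR (S m - j))).
   pose proof (IHm ltac:(lia)). pose proof (ln_step (S m) ltac:(lia)). lra. Qed.

Theorem lemmaC2 :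
  exists C : R, 0 < C /\
  forall (n d : nat) (Z : nat -> cmat) (B : R),
    (3 <= n)%nat -> Nat.Odd n -> (1 <= d)%nat ->
    let n1 := ((n + 1) / 2)%nat in
    (forall p : nat, (p < n1)%nat ->
        / INR d * rsum d (fun i => rownorm2 n1 (Z i) p) <= B) ->
    / INR d * rsum d (fun i =>
        rsum n (fun k => / INR (wt n1 k) * Cnorm2 (cinner n1 (Z i) (Gmat n1 k))))
    <= C * B * ln (INR n1).
Proof.
  exists 6. split; [lra|]. intros n d Z B Hn Hodd Hd n1 HB.
  destruct Hodd as [m Hm]. subst n.
  assert (Hn1 : n1 = S m).
  { unfold n1. replace (2 * m + 1 + 1)%nat with (S m * 2)%nat by lia. apply Nat.div_mul; lia. }
  clearbody n1. subst n1.
  assert (Hdpos : 0 < / INR d) by (apply Rinv_0_lt_compat, lt_0_INR; lia).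
  assert (HB0 : 0 <= B).
  { eapply Rle_trans; [|apply (HB 0%nat); lia]. apply Rmult_le_pos; [lra|].
    apply rsum_nonneg; intros. apply rsum_nonneg; intros. apply Cnorm2_nonneg. }
  set (c := fun j => / INR (S j) + / INR (S m - j)).
  assert (Hc : forall j, (j < S m)%nat -> 0 <= c j).
  { intros j Hj. unfold c. pose proof (Rinv_0_lt_compat (INR (S j)) ltac:(apply lt_0_INR; lia)).
    pose proof (Rinv_0_lt_compat (INR (S m - j)) ltac:(apply lt_0_INR; lia)). lra. }
  apply Rle_trans with (/ INR d * rsum d (fun i => rsum (S m) (fun j => c j * rownorm2 (S m) (Z i) j))).
  { apply Rmult_le_compat_l; [lra|]. apply rsum_le; intros i _. apply per_i. }
  rewrite rsum_swap, <- rsum_scal.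
  apply Rle_trans with (rsum (S m) (fun j => c j * B)).
  { apply rsum_le; intros j Hj. rewrite rsum_scal.
    replace (/ INR d * (c j * rsum d (fun i => rownorm2 (S m) (Z i) j)))
      with (c j * (/ INR d * rsum d (fun i => rownorm2 (S m) (Z i) j))) by ring.
    apply Rmult_le_compat_l; auto. }
  unfold c. rewrite (rsum_ext _ _ (fun j => B * / INR (S j) + B * / INR (S m - j))) by (intros; ring).
  rewrite rsum_plus, !rsum_scal.
  pose proof (H_bound (S m) ltac:(lia)). pose proof (T_bound (S m) ltac:(lia)).
  assert (HL : / 2 <= ln (INR (S m))).
  { assert (H2 : 2 <= INR (S m)) by (replace 2 with (INR 2) by (simpl; ring); apply le_INR; lia).
    destruct (Rle_lt_or_eq_dec _ _ H2) as [Hlt|Heq].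
    - pose proof (ln_increasing 2 _ ltac:(lra) Hlt). pose proof ln_lt_2. lra.
    - rewrite <- Heq. pose proof ln_lt_2. lra. }
  nra.
Qed.
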